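(* For any finite simple graph $G$, $|\operatorname{nucleus}(G)| + |\operatorname{diadem}(G)| \le 2\alpha(G)$.
   Context: For $X\subseteq V(G)$, $N(X)$ is the set of vertices adjacent to some vertex of $X$, and $d(X)=|X|-|N(X)|$. A set is independent if no two of its vertices are adjacent. An independent set $S$ is critical if $d(S)=\max\{d(X):X\subseteq V(G)\}$; the empty set may be critical. A maximum critical independent set is a critical independent set of maximum cardinality. $\operatorname{nucleus}(G)$ and $\operatorname{diadem}(G)$ are, respectively, the intersection and the union of all maximum critical independent sets of $G$. $\alpha(G)$ is the independence number. *)

(* Defs.v *)
From mathcomp Require Import all_boot all_order all_algebra.
Set Implicit Arguments. Unset Strict Implicit. Unset Printing Implicit Defensive.
Import GRing.Theory Num.Theory.

Section Graph.
Variables (T : finType) (e : rel T).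

Definition nbhd (X : {set T}) : {set T} := [set y | [exists x in X, e x y]].

Definition dif (X : {set T}) : int := (#|X|%:Z - #|nbhd X|%:Z)%R.

Definition independent (S : {set T}) : bool :=
  [forall x in S, forall y in S, ~~ e x y].

Definition critical_difference : int :=
  \big[Order.max/dif set0]_(X : {set T}) dif X.

Definition critical_independent (S : {set T}) : bool :=
  independent S && (dif S == critical_difference).

Definition max_crit_card : nat :=
  \max_(S : {set T} | critical_independent S) #|S|.

Definition maximum_critical_independent (S : {set T}) : bool :=
  critical_independent S && (#|S| == max_crit_card).

Definition nucleus : {set T} :=
  \bigcap_(S | maximum_critical_independent S) S.

Definition diadem : {set T} :=
  \bigcup_(S | maximum_critical_independent S) S.

Definition alpha : nat := \max_(S : {set T} | independent S) #|S|.

End Graph.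

(* Main.v *)
Require Import Defs.
From mathcomp Require Import all_boot all_order all_algebra.
From mathcomp Require Import zify.
Set Implicit Arguments. Unset Strict Implicit. Unset Printing Implicit Defensive.
Import Order.TTheory GRing.Theory Num.Theory.

Section Proof.
Variables (T : finType) (e : rel T) (e_sym : symmetric e).

Lemma nbhdP (X : {set T}) y : reflect (exists2 x, x \in X & e x y) (y \in nbhd e X).
Proof.
rewrite inE; apply: (iffP existsP) => [[x /andP [? ?]]|[x ? ?]]; first by exists x.
by exists x; apply/andP.
Qed.

Lemma nbhdS (A B : {set T}) : A \subset B -> nbhd e A \subset nbhd e B.
Proof.
move=> /subsetP AB; apply/subsetP => y /nbhdP [x xA exy]; apply/nbhdP.
by exists x => //; apply: AB.
Qed.

Lemma indepP (S : {set T}) x y : independent e S -> x \in S -> y \in S -> ~~ e x y.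
Proof.
by move/forallP/(_ x)/implyP => H xS; move/H: xS => /forallP/(_ y)/implyP.
Qed.

Lemma indepI (S : {set T}) : (forall x y, x \in S -> y \in S -> ~~ e x y) -> independent e S.
Proof.
move=> H; apply/forallP => x; apply/implyP => xS; apply/forallP => y; apply/implyP => yS.
exact: H.
Qed.

Lemma dif_le_seq (X : {set T}) (r : seq {set T}) : X \in r ->
  (dif e X <= \big[Order.max/dif e set0]_(Y <- r) dif e Y)%R.
Proof.
elim: r => // y r IH; rewrite inE big_cons le_max => /orP [/eqP ->|/IH ->].
  by rewrite lexx.
by rewrite orbT.
Qed.

Lemma dif_le (X : {set T}) : (dif e X <= critical_difference e)%R.
Proof. exact: (dif_le_seq (mem_index_enum X)). Qed.

Lemma cd_attained : exists X, critical_difference e = dif e X.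
Proof.
rewrite /critical_difference; apply: (big_ind (fun y => exists X, y = dif e X)).
- by exists set0.
- move=> x y [X ->] [Y ->]; case: (leP (dif e X) (dif e Y)) => _; [by exists Y| by exists X].
- by move=> X _; exists X.
Qed.

Lemma dif_remove (X A Z : {set T}) : A \subset X -> Z \subset nbhd e X ->
  [disjoint nbhd e (X :\: A) & Z] ->
  (dif e X - (#|A|)%:Z + (#|Z|)%:Z <= dif e (X :\: A))%R.
Proof.
move=> AX ZN dis.
have h1 : #|A| + #|X :\: A| = #|X|.
  by rewrite -(cardsID A X) (setIidPr AX).
have h2 : #|nbhd e (X :\: A)| + #|Z| <= #|nbhd e X|.
  rewrite -cardsUI (disjoint_setI0 dis) cards0 addn0.
  apply: subset_leq_card; rewrite subUset ZN andbT; apply: nbhdS; exact: subsetDl.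
rewrite /dif; lia.
Qed.

Lemma supermod (A B : {set T}) :
  (dif e A + dif e B <= dif e (A :|: B) + dif e (A :&: B))%R.
Proof.
have h1 := cardsUI A B.
have h2 : #|nbhd e (A :|: B)| + #|nbhd e (A :&: B)| <= #|nbhd e A| + #|nbhd e B|.
  rewrite -(cardsUI (nbhd e A)); apply: leq_add; apply: subset_leq_card.
    apply/subsetP => y /nbhdP [x] /setUP [xA|xB] exy; apply/setUP.
      by left; apply/nbhdP; exists x.
    by right; apply/nbhdP; exists x.
  by rewrite subsetI; apply/andP; split; apply: nbhdS; [exact: subsetIl|exact: subsetIr].
rewrite /dif; lia.
Qed.

Lemma crit_exists : exists S, critical_independent e S.
Proof.
have [X hX] := cd_attained.
exists (X :\: (X :&: nbhd e X)); apply/andP; split.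
  apply: indepI => x y /setDP [xX xN] /setDP [yX yN]; apply/negP => exy.
  by move: yN; rewrite in_setI yX /=; case/negP; apply/nbhdP; exists x.
rewrite eq_le dif_le /=.
have := @dif_remove X (X :&: nbhd e X) (X :&: nbhd e X) (subsetIl _ _) (subsetIr _ _).
rewrite -hX.
have -> : [disjoint nbhd e (X :\: X :&: nbhd e X) & X :&: nbhd e X].
  rewrite disjoints_subset; apply/subsetP => y /nbhdP [x].
  move=> /setDP [xX xN] exy; rewrite in_setC in_setI; apply/negP => /andP [yX _].
  by move: xN; rewrite in_setI xX /=; case/negP; apply/nbhdP; exists y => //; rewrite e_sym.
by move/(_ isT); rewrite subrK.
Qed.


Lemma key (S B : {set T}) v : maximum_critical_independent e S ->
  maximum_critical_independent e B -> v \in B -> v \notin S -> v \notin nbhd e S -> False.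
Proof.
move=> /andP [/andP [iS /eqP dS] /eqP cS] /andP [/andP [iB /eqP dB] _] vB vS vN.
set X := S :|: B; set B2 := B :&: nbhd e S; set W := S :&: nbhd e B.
have dX : (critical_difference e <= dif e X)%R.
  rewrite /X; have := supermod S B; have := dif_le (S :&: B); rewrite dS dB; lia.
have hT := @dif_remove X B2 W (subset_trans (subsetIl _ _) (subsetUr _ _))
  (subset_trans (subsetIr _ _) (nbhdS (subsetUr S B))).
have hU := @dif_remove X W B2 (subset_trans (subsetIl _ _) (subsetUl _ _))
  (subset_trans (subsetIr _ _) (nbhdS (subsetUl S B))).
have dT : [disjoint nbhd e (X :\: B2) & W].
  rewrite disjoints_subset; apply/subsetP => y /nbhdP [t /setDP [tX tB2] ety].
  rewrite in_setC in_setI; apply/negP => /andP [yS yNB].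
  case/setUP: tX => [tS|tB]; first by move: (indepP iS tS yS); rewrite ety.
  move: tB2; rewrite in_setI tB /=; case/negP; apply/nbhdP; exists y => //.
  by rewrite e_sym.
have dU : [disjoint nbhd e (X :\: W) & B2].
  rewrite disjoints_subset; apply/subsetP => y /nbhdP [t /setDP [tX tW] ety].
  rewrite in_setC in_setI; apply/negP => /andP [yB yNS].
  case/setUP: tX => [tS|tB]; last by move: (indepP iB tB yB); rewrite ety.
  move: tW; rewrite in_setI tS /=; case/negP; apply/nbhdP; exists y => //.
  by rewrite e_sym.
move: (hT dT) (hU dU) => {}hT {}hU.
have := dif_le (X :\: W); have := dif_le (X :\: B2) => l1 l2.
have critT : critical_independent e (X :\: B2).
  apply/andP; split; last by rewrite eq_le l1 /=; lia.
  apply: indepI => x y /setDP [xX xB2] /setDP [yX yB2].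
  case/setUP: xX => [xS|xB]; case/setUP: yX => [yS|yB].
  - exact: indepP iS xS yS.
  - apply/negP => exy; move: yB2; rewrite in_setI yB /=; case/negP.
    by apply/nbhdP; exists x.
  - apply/negP => exy; move: xB2; rewrite in_setI xB /=; case/negP.
    by apply/nbhdP; exists y => //; rewrite e_sym.
  - exact: indepP iB xB yB.
have := leq_bigmax_cond (F := fun S : {set T} => #|S|) _ critT.
rewrite -/(max_crit_card e) -cS => leT.
have : v |: S \subset X :\: B2.
  apply/subsetP => x /setU1P [->|xS]; rewrite in_setD.
    by rewrite in_setI (negbTE vN) andbF /= in_setU vB orbT.
  rewrite in_setU xS /= andbT in_setI; apply/negP => /andP [_ /nbhdP [s sS esx]].
  by move: (indepP iS sS xS); rewrite esx.
move/subset_leq_card; rewrite cardsU1 vS => h; lia.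
Qed.

Lemma main : #|nucleus e| + #|diadem e| <= 2 * alpha e.
Proof.
have [S0 cS0] := crit_exists.
pose S := [arg max_(S > S0 | critical_independent e S) #|S|].
have [critS mS] : critical_independent e S /\ #|S| = max_crit_card e.
  rewrite /max_crit_card (bigop.bigmax_eq_arg S0) //; split => //.
  by rewrite /S; case: arg_maxnP.
have maxS : maximum_critical_independent e S.
  by rewrite /maximum_critical_independent critS mS eqxx.
have KS : nucleus e \subset S by apply: (bigcap_inf _ maxS).
have SD : S \subset diadem e by apply: (bigcup_sup _ maxS).
have sub : diadem e :\: S \subset nbhd e S :\: nbhd e (nucleus e).
  apply/subsetP => v /setDP [vD vS]; have [B maxB vB] := bigcupP vD.
  rewrite in_setD; apply/andP; split.
    apply/negP => /nbhdP [x xK exv]; move/bigcapP: xK => /(_ B maxB) xB.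
    by case/andP: maxB => /andP [iB _] _; move: (indepP iB xB vB); rewrite exv.
  case: (boolP (v \in nbhd e S)) => // vN; exfalso; exact: (key maxS maxB vB vS vN).
have h1 := cardsID S (diadem e); rewrite (setIidPr SD) in h1.
have h2 := subset_leq_card sub.
rewrite (cardsD (nbhd e S)) (setIidPr (nbhdS KS)) in h2.
have h3 := subset_leq_card KS.
have h4 := subset_leq_card (nbhdS KS).
have h5 := dif_le (nucleus e).
case/andP: critS => iS /eqP dS; rewrite -dS /dif in h5.
have h6 := leq_bigmax_cond (F := fun S : {set T} => #|S|) _ iS.
rewrite -/(alpha e) in h6.
lia.
Qed.

End Proof.

Theorem theorem1p7 (T : finType) (e : rel T)
  (e_sym : symmetric e) (e_irr : irreflexive e) :
  #|nucleus e| + #|diadem e| <= 2 * alpha e.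
Proof. exact: main. Qed.
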